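(* For any pure $n$-qubit state $\psi$ and any $0<\tau<1$, $F_\psi(\tau)\le\dfrac{M_1(\psi)}{\log_2(1/\tau)}$.
   Context: Pauli strings $P_x$, $x\in\{0,1\}^{2n}$, are the $n$-qubit Hermitian Pauli strings; $\alpha_\psi(x)=\mathrm{tr}(\psi P_x)$; the Pauli distribution is $p_\psi(x)=\alpha_\psi(x)^2/2^n$. The CDF is $F_\psi(\tau)=\sum_{x:\,\alpha_\psi(x)^2<\tau}p_\psi(x)$. $M_1(\psi)=H_1(p_\psi)-n$, where $H_1(p)=-\sum_xp(x)\log_2p(x)$. *)

(* Defs.v *)
From HB Require Import structures.
From mathcomp Require Import all_boot all_order all_algebra.
From mathcomp Require Import complex.
From mathcomp Require Import reals exp.
Set Implicit Arguments. Unset Strict Implicit. Unset Printing Implicit Defensive.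
Import Order.TTheory GRing.Theory Num.Theory ComplexField.
Local Open Scope ring_scope.
Local Open Scope complex_scope.

Definition basis (n : nat) := {ffun 'I_n -> bool}.

(* Pauli labels x in {0,1}^{2n}: for each qubit i a pair (a_i, b_i);
   (false,false)=I, (true,false)=X, (false,true)=Z, (true,true)=Y. *)
Definition pauli_label (n : nat) := {ffun 'I_n -> bool * bool}.

Definition pauli1 (R : rcfType) (ab : bool * bool) (u v : bool) : R[i] :=
  match ab with
  | (false, false) => if u == v then 1 else 0
  | (true, false) => if u != v then 1 else 0
  | (false, true) => if u == v then (if u then -1 else 1) else 0
  | (true, true) => if u != v then (if u then 'i else - 'i) else 0
  end.

(* entry (u,v) of the n-qubit Pauli string P_x = tensor product *)
Definition pauli (R : rcfType) (n : nat) (x : pauli_label n) (u v : basis n) : R[i] :=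
  \prod_(k < n) pauli1 R (x k) (u k) (v k).

Definition is_pure_state (R : rcfType) (n : nat) (psi : basis n -> R[i]) : Prop :=
  \sum_(u : basis n) `|psi u| ^+ 2 = 1.

(* alpha_psi(x) = tr(|psi><psi| P_x) = <psi|P_x|psi>  (real, P_x Hermitian) *)
Definition alpha (R : rcfType) (n : nat) (psi : basis n -> R[i]) (x : pauli_label n) : R :=
  complex.Re (\sum_(u : basis n) \sum_(v : basis n) (psi u)^* * pauli R x u v * psi v).

Definition pauli_dist (R : rcfType) (n : nat) (psi : basis n -> R[i]) (x : pauli_label n) : R :=
  alpha psi x ^+ 2 / 2 ^+ n.

Definition log2 (R : realType) (t : R) : R := ln t / ln 2.

(* Shannon entropy in bits, with the convention 0 log 0 = 0 *)
Definition H1 (R : realType) (T : finType) (p : T -> R) : R :=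
  - \sum_(x : T | 0 < p x) p x * log2 (p x).

Definition M1 (R : realType) (n : nat) (psi : basis n -> R[i]) : R :=
  H1 (pauli_dist psi) - n%:R.

Definition pauli_cdf (R : realType) (n : nat) (psi : basis n -> R[i]) (tau : R) : R :=
  \sum_(x : pauli_label n | alpha psi x ^+ 2 < tau) pauli_dist psi x.

(* Main.v *)
Require Import Defs.
From HB Require Import structures.
From mathcomp Require Import all_boot all_order all_algebra.
From mathcomp Require Import complex.
From mathcomp Require Import reals exp.
From mathcomp Require Import ring lra.
Import Order.TTheory GRing.Theory Num.Theory ComplexField.
Local Open Scope ring_scope.
Local Open Scope complex_scope.
Set Implicit Arguments. Unset Strict Implicit. Unset Printing Implicit Defensive.

Lemma pauli1_herm (R : rcfType) ab u v : (pauli1 R ab u v)^* = pauli1 R ab v u.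
Proof.
case: ab => [a b]; case: a; case: b; case: u; case: v => /=.
all: by apply/eqP; rewrite eq_complex /= ?oppr0 ?opprK ?eqxx.
Qed.

Lemma norm_i (R : rcfType) : `|'i : R[i]| = 1.
Proof. by rewrite normc_def /= expr0n expr1n add0r sqrtr1. Qed.

Lemma pauli1_row (R : rcfType) ab u : \sum_(b : bool) `|pauli1 R ab u b| = 1.
Proof.
rewrite big_bool /=.
case: ab => [a b]; case: a; case: b; case: u => /=;
 rewrite ?normr0 ?normr1 ?normrN ?add0r ?addr0 ?norm_i //.
 all: by rewrite normc_def /= expr0n expr1n addr0 sqrtr1.
Qed.
Lemma pauli1_col (R : rcfType) ab v : \sum_(b : bool) `|pauli1 R ab b v| = 1.
Proof.
rewrite big_bool /=.
case: ab => [a b]; case: a; case: b; case: v => /=;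
 rewrite ?normr0 ?normr1 ?normrN ?add0r ?addr0 ?norm_i //.
 all: by rewrite normc_def /= expr0n expr1n addr0 sqrtr1.
Qed.

Lemma pauli1_compl (R : rcfType) u v u' v' :
  \sum_(ab : bool * bool) pauli1 R ab u v * (pauli1 R ab u' v')^* =
  (2 * ((u == u') && (v == v')))%:R.
Proof.
transitivity (\sum_(a : bool) \sum_(b : bool) pauli1 R (a,b) u v * (pauli1 R (a,b) u' v')^*).
  by rewrite pair_bigA; apply: eq_bigr => -[].
rewrite !big_bool /=.
case: u; case: v; case: u'; case: v' => /=.
all: apply/eqP; rewrite eq_complex /= ?oppr0 ?opprK ?eqxx.
all: by apply/andP; split; apply/eqP; ring.
Qed.

Lemma sum_ffun_prod (R : comNzRingType) n (T : finType) (F : 'I_n -> T -> R) :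
  \sum_(f : {ffun 'I_n -> T}) \prod_k F k (f k) = \prod_k \sum_t F k t.
Proof. by rewrite bigA_distr_bigA. Qed.

Lemma pauli_row (R : rcfType) n (x : pauli_label n) (u : basis n) :
  \sum_(v : basis n) `|pauli R x u v| = 1.
Proof.
rewrite /pauli; under eq_bigr do rewrite normr_prod.
rewrite (@sum_ffun_prod _ _ _ (fun k b => `|pauli1 R (x k) (u k) b|)).
by rewrite big1 // => k _; rewrite pauli1_row.
Qed.

Lemma pauli_col (R : rcfType) n (x : pauli_label n) (v : basis n) :
  \sum_(u : basis n) `|pauli R x u v| = 1.
Proof.
rewrite /pauli; under eq_bigr do rewrite normr_prod.
rewrite (@sum_ffun_prod _ _ _ (fun k b => `|pauli1 R (x k) b (v k)|)).
by rewrite big1 // => k _; rewrite pauli1_col.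
Qed.

Lemma pauli_herm (R : rcfType) n (x : pauli_label n) u v :
  (pauli R x u v)^* = pauli R x v u.
Proof. rewrite /pauli rmorph_prod; apply: eq_bigr => k _; exact: pauli1_herm. Qed.

Lemma pauli_compl (R : rcfType) n (u v u' v' : basis n) :
  \sum_(x : pauli_label n) pauli R x u v * (pauli R x u' v')^* =
  2 ^+ n * ((u == u') && (v == v'))%:R.
Proof.
rewrite /pauli; under eq_bigr do rewrite rmorph_prod -big_split /=.
rewrite (@sum_ffun_prod _ _ _ (fun k ab => pauli1 R ab (u k) (v k) * (pauli1 R ab (u' k) (v' k))^*)).
under eq_bigr do rewrite pauli1_compl.
have [/andP [/eqP <- /eqP <-]|H] := boolP ((u == u') && (v == v')).
  rewrite mulr1; transitivity (\prod_(k < n) (2 : R[i])).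
    by apply: eq_bigr => k _; rewrite !eqxx.
  by rewrite prodr_const card_ord.
rewrite mulr0.
have [k Hk] : exists k, ~~ ((u k == u' k) && (v k == v' k)).
  apply/existsP; apply: contraR H => /existsPn Hall.
  apply/andP; split; apply/eqP/ffunP => k; have := Hall k;
   by rewrite negbK => /andP [/eqP ? /eqP ?].
by rewrite (bigD1 k) //= (negbTE Hk) muln0 mul0r.
Qed.

Definition zz (R : rcfType) n (psi : basis n -> R[i]) (x : pauli_label n) : R[i] :=
  \sum_(u : basis n) \sum_(v : basis n) (psi u)^* * pauli R x u v * psi v.

Lemma zz_conj (R : rcfType) n (psi : basis n -> R[i]) x : (zz psi x)^* = zz psi x.
Proof.
rewrite /zz rmorph_sum; under eq_bigr do rewrite rmorph_sum.
rewrite exchange_big; apply: eq_bigr => a _; apply: eq_bigr => b _ /=.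
rewrite !rmorphM /= conjcK pauli_herm; ring.
Qed.

Lemma conj_real (R : rcfType) (w : R[i]) : w^* = w -> w = (complex.Re w)%:C.
Proof.
case: w => a b /= [h].
have -> : b = 0 by lra.
by [].
Qed.

Lemma zz_alpha (R : rcfType) n (psi : basis n -> R[i]) x : zz psi x = (alpha psi x)%:C.
Proof. exact: (conj_real (zz_conj psi x)). Qed.

Lemma sum_delta (T : finType) (R : pzRingType) (F : T -> R) u :
  \sum_u' F u' * (u == u')%:R = F u.
Proof.
rewrite (bigD1 u) //= eqxx mulr1 big1 ?addr0 // => u' /negPf.
by rewrite eq_sym => ->; rewrite mulr0.
Qed.

Lemma sum_alpha2 (R : rcfType) n (psi : basis n -> R[i]) :
  is_pure_state psi -> \sum_x alpha psi x ^+ 2 = 2 ^+ n.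
Proof.
move=> hpsi.
suff: (\sum_x alpha psi x ^+ 2)%:C = (2 ^+ n : R)%:C by move=> [].
rewrite rmorph_sum rmorphXn /=.
transitivity (\sum_x zz psi x * (zz psi x)^*).
  apply: eq_bigr => x _; rewrite zz_alpha -[Num.conj _]/(conjc _) conjc_real expr2.
  by apply/eqP; rewrite eq_complex /= !mulr0 !mul0r subr0 addr0 !eqxx.
transitivity (\sum_(u : basis n) \sum_(v : basis n) \sum_(u' : basis n) \sum_(v' : basis n)
   ((psi u)^* * psi v * psi u' * (psi v')^*) *
   \sum_(x : pauli_label n) (pauli R x u v * (pauli R x u' v')^*)).
  have expand : forall x, zz psi x * (zz psi x)^* =
     \sum_(u : basis n) \sum_(v : basis n) \sum_(u' : basis n) \sum_(v' : basis n)
     ((psi u)^* * psi v * psi u' * (psi v')^*) * (pauli R x u v * (pauli R x u' v')^*).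
    move=> x; rewrite /zz rmorph_sum mulr_suml; apply: eq_bigr => u _.
    rewrite mulr_suml; apply: eq_bigr => v _.
    rewrite mulr_sumr; apply: eq_bigr => u' _.
    rewrite rmorph_sum mulr_sumr; apply: eq_bigr => v' _ /=.
    rewrite !rmorphM /= ?conjcK ?conjCK; ring.
  under eq_bigr do rewrite expand.
  rewrite exchange_big; apply: eq_bigr => u _.
  rewrite exchange_big; apply: eq_bigr => v _.
  rewrite exchange_big; apply: eq_bigr => u' _.
  rewrite exchange_big; apply: eq_bigr => v' _.
  by rewrite mulr_sumr.
have e : forall x y a b : R[i], x * (y * (a * b)) = (x * y * b) * a.
  by move=> *; ring.
under eq_bigr => u _ do under eq_bigr => v _ do
  under eq_bigr => u' _ do under eq_bigr => v' _ do
  rewrite pauli_compl -mulnb natrM e.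
under eq_bigr => u _ do under eq_bigr => v _ do
  under eq_bigr => u' _ do rewrite -mulr_suml.
under eq_bigr => u _ do under eq_bigr => v _ do rewrite sum_delta sum_delta.
transitivity (2 ^+ n * ((\sum_u `|psi u| ^+ 2) * (\sum_v `|psi v| ^+ 2)) : R[i]).
  rewrite mulr_suml mulr_sumr; apply: eq_bigr => u _.
  rewrite mulr_sumr mulr_sumr; apply: eq_bigr => v _.
  rewrite !normCK; ring.
rewrite hpsi mulr1.
rewrite mulr1; congr (_ ^+ _); apply/eqP; rewrite eq_complex /= ?addr0 ?eqxx //.
Qed.

Lemma amgm (R : rcfType) (a b : R[i]) : 0 <= a -> 0 <= b -> a * b <= (a ^+ 2 + b ^+ 2) / 2.
Proof.
move=> ha hb.
have h : 0 <= (a - b) ^+ 2 by rewrite -realEsqr realB ?ger0_real.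
rewrite ler_pdivlMr ?ltr0n // -subr_ge0.
have -> : (a ^+ 2 + b ^+ 2 - a * b * 2) = (a - b) ^+ 2 by ring.
exact: h.
Qed.

Lemma norm_zz_le1 (R : rcfType) n (psi : basis n -> R[i]) x :
  is_pure_state psi -> `|zz psi x| <= 1.
Proof.
move=> hpsi.
apply: (le_trans (ler_norm_sum _ _ _)).
apply: le_trans (_ : \sum_(u : basis n) \sum_(v : basis n)
   `|pauli R x u v| * ((`|psi u| ^+ 2 + `|psi v| ^+ 2) / 2) <= 1).
  apply: ler_sum => u _; apply: (le_trans (ler_norm_sum _ _ _)).
  apply: ler_sum => v _.
  rewrite !normrM norm_conjC [`|psi u| * _]mulrC -mulrA ler_wpM2l //.
  exact: amgm.
under eq_bigr do under eq_bigr do rewrite mulrDl mulrDr.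
under eq_bigr do rewrite big_split /=.
rewrite big_split /=.
have h1 : \sum_(u : basis n) \sum_(v : basis n) `|pauli R x u v| * (`|psi u| ^+ 2 / 2) = 1 / 2.
  transitivity (\sum_(u : basis n) (`|psi u| ^+ 2 / 2) * \sum_(v : basis n) `|pauli R x u v|).
    by apply: eq_bigr => u _; rewrite mulr_sumr; apply: eq_bigr => v _; rewrite mulrC.
  under eq_bigr do rewrite pauli_row mulr1.
  by rewrite -mulr_suml hpsi.
have h2 : \sum_(u : basis n) \sum_(v : basis n) `|pauli R x u v| * (`|psi v| ^+ 2 / 2) = 1 / 2.
  rewrite exchange_big /=.
  transitivity (\sum_(v : basis n) (`|psi v| ^+ 2 / 2) * \sum_(u : basis n) `|pauli R x u v|).
    by apply: eq_bigr => v _; rewrite mulr_sumr; apply: eq_bigr => u _; rewrite mulrC.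
  under eq_bigr do rewrite pauli_col mulr1.
  by rewrite -mulr_suml hpsi.
by rewrite h1 h2 -splitr.
Qed.

Lemma alpha_le1 (R : rcfType) n (psi : basis n -> R[i]) x :
  is_pure_state psi -> alpha psi x ^+ 2 <= 1.
Proof.
move=> hpsi; have := norm_zz_le1 x hpsi.
rewrite zz_alpha normc_def /= expr0n addr0 sqrtr_sqr lecR => h.
by rewrite -real_normK ?num_real // expr_le1.
Qed.


Local Close Scope complex_scope.

Theorem lemma3 (R : realType) (n : nat) (psi : basis n -> R[i])
  (hpsi : is_pure_state psi) (tau : R) (htau0 : 0 < tau) (htau1 : tau < 1) :
  pauli_cdf psi tau <= M1 psi / log2 (tau^-1).
Proof.
set N := (2:R) ^+ n.
have hN : 0 < N by rewrite exprn_gt0.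
have ha0 x : 0 <= alpha psi x ^+ 2 by rewrite sqr_ge0.
have ha1 x : alpha psi x ^+ 2 <= 1 := alpha_le1 x hpsi.
have hsum : \sum_x alpha psi x ^+ 2 = N := sum_alpha2 hpsi.
have ln2 : 0 < ln (2:R) by rewrite ln_gt0 // ltr1n.
have hL : 0 < log2 tau^-1 by rewrite /log2 divr_gt0 // ln_gt0 // invf_gt1.
have hp0 x : 0 <= pauli_dist psi x by rewrite /pauli_dist divr_ge0 // ltW.
have hsp : \sum_x pauli_dist psi x = 1.
  by rewrite /pauli_dist -mulr_suml hsum divff // gt_eqF.
have hapos x : 0 < pauli_dist psi x -> 0 < alpha psi x ^+ 2.
  by rewrite /pauli_dist pmulr_lgt0 // invr_gt0.
have hlog x : 0 < pauli_dist psi x ->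
    log2 (pauli_dist psi x) = log2 (alpha psi x ^+ 2) - n%:R.
  move=> hp; have ha := hapos x hp.
  rewrite /log2 /pauli_dist ln_div ?posrE // /N (lnXn n (x:=2)) // mulrBl.
  by congr (_ - _); rewrite -[ln 2 *+ n]mulr_natr mulrAC divff ?mul1r // gt_eqF.
have hM : M1 psi = \sum_(x | 0 < pauli_dist psi x)
    pauli_dist psi x * (- log2 (alpha psi x ^+ 2)).
  rewrite /M1 /H1.
  under eq_bigr => x hx do rewrite hlog // mulrBr.
  have hsp' : \sum_(x | 0 < pauli_dist psi x) pauli_dist psi x = 1.
    rewrite -hsp [RHS](bigID (fun x => 0 < pauli_dist psi x)) /= [X in _ = _ + X]big1 ?addr0 //.
    by move=> x hx; apply/eqP; rewrite eq_le hp0 andbT leNgt hx.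
  rewrite sumrB -mulr_suml hsp' mul1r.
  have e : forall A B : R, -(A - B) - B = - A by move=> A B; ring.
  by rewrite e -sumrN; apply: eq_bigr => x _; rewrite mulrN.
rewrite /pauli_cdf ler_pdivlMr // hM mulr_suml.
rewrite big_mkcond [X in _ <= X]big_mkcond /=; apply: ler_sum => x _.
case: ifP => hx; case: ifP => hp.
- have ha := hapos x hp.
  rewrite ler_wpM2l // /log2 -mulNr ler_pM2r ?invr_gt0 //.
  rewrite -lnV ?posrE // ler_ln ?posrE ?invr_gt0 //.
  by rewrite lef_pV2 ?posrE // ltW.
- have -> : pauli_dist psi x = 0.
    by apply/eqP; rewrite eq_le hp0 andbT leNgt hp.
  by rewrite mul0r.
- by rewrite mulr_ge0 // /log2 -mulNr mulr_ge0 // ?invr_ge0 ?(ltW ln2) ?oppr_ge0 ?ln_le0.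
- by rewrite lexx.
Qed.
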